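(* Let $\mathcal{H}$ be a complex Hilbert space and let $\mathcal{A}:\operatorname{dom}(\mathcal{A})\subseteq\mathcal{H}\to\mathcal{H}$ be a closed linear operator (not necessarily bounded or selfadjoint). Let $$r(z)=\omega_0+\sum_{j=1}^N\sum_{i=1}^{\nu_j}\frac{\omega_{j,i}}{(z_j-z)^i}$$ with $\omega_0,\omega_{j,i}\in\mathbb{C}$, positive integers $\nu_j$, and distinct points $z_1,\dots,z_N$ in the resolvent set $\rho(\mathcal{A})$, and let $r(\mathcal{A})=\omega_0+\sum_{j=1}^N\sum_{i=1}^{\nu_j}\omega_{j,i}R(z_j)^i$, a bounded operator on $\mathcal{H}$. Then for every $\mu\in\mathbb{C}$ with $\mu\neq\omega_0$, $$E_\mu(r(\mathcal{A}))=\bigoplus_{\lambda\in r^{-1}_\mu}E^\infty_\lambda(\mathcal{A}),$$ where the right-hand side is a direct sum.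
   Context: $R(z)=(z-\mathcal{A})^{-1}:\mathcal{H}\to\operatorname{dom}(\mathcal{A})$ denotes the resolvent for $z\in\rho(\mathcal{A})$. Set $\operatorname{dom}(\mathcal{A}^1)=\operatorname{dom}(\mathcal{A})$, $\operatorname{dom}(\mathcal{A}^n)=\{x\in\operatorname{dom}(\mathcal{A}):\mathcal{A}x\in\operatorname{dom}(\mathcal{A}^{n-1})\}$ for $n>1$, and $\operatorname{dom}(\mathcal{A}^\infty)=\bigcap_{n\ge1}\operatorname{dom}(\mathcal{A}^n)$. For $\lambda\in\mathbb{C}$, $E^\infty_\lambda(\mathcal{A})=\bigcup_{n\ge1}\{u\in\operatorname{dom}(\mathcal{A}^\infty):(\mathcal{A}-\lambda)^nu=0\}$ (trivial if $\lambda$ is not an eigenvalue). For $\mu\in\mathbb{C}$, $E_\mu(r(\mathcal{A}))=\bigcup_{n\ge1}\{u\in\mathcal{H}:(r(\mathcal{A})-\mu)^nu=0\}$. Finally $r^{-1}_\mu=\{\lambda\in\mathbb{C}\setminus\{z_1,\dots,z_N\}:\ r(\lambda)=\mu\}$. *)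

(* Defs.v *)
From HB Require Import structures.
From mathcomp Require Import all_boot all_order all_algebra.
From mathcomp Require Import all_classical all_reals all_analysis.
From mathcomp Require Import complex.
Set Implicit Arguments. Unset Strict Implicit. Unset Printing Implicit Defensive.
Import Order.TTheory GRing.Theory Num.Theory.
Import numFieldNormedType.Exports.
Local Open Scope ring_scope.
Local Open Scope classical_set_scope.

Section Defs.
Variable R : realType.
Local Notation C := (R[i]).
Variable H : completeNormedModType C.

(* ip is an inner product on H (linear in the first argument, conjugate
   symmetric) inducing the norm of H:  <x,x> = |x|^2.  Together with the
   completeness of H, (H, ip) is a complex Hilbert space. *)
Definition is_inner_product (ip : H -> H -> C) : Prop :=
  [/\ forall (a : C) (x y v : H), ip (a *: x + y) v = a * ip x v + ip y v,
      forall x y : H, ip y x = (ip x y)^*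
    & forall x : H, ip x x = `|x| ^+ 2].

Definition is_subspace (dom : set H) : Prop :=
  dom 0 /\ forall (a : C) (x y : H), dom x -> dom y -> dom (a *: x + y).

(* A : dom(A) ⊆ H -> H is a closed linear operator (values of A outside dom
   are irrelevant). *)
Definition is_closed_operator (dom : set H) (A : H -> H) : Prop :=
  [/\ is_subspace dom,
      forall (a : C) (x y : H), dom x -> dom y -> A (a *: x + y) = a *: A x + A y
    & closed [set p : H * H | dom p.1 /\ p.2 = A p.1]].

(* R(z) = (z - A)^{-1} : H -> dom(A)  (meaningful when z is in the resolvent set) *)
Definition resolvent (dom : set H) (A : H -> H) (z : C) (y : H) : H :=
  xget 0 [set x | dom x /\ z *: x - A x = y].

Definition in_resolvent_set (dom : set H) (A : H -> H) (z : C) : Prop :=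
  (forall y : H, exists! x : H, dom x /\ z *: x - A x = y)
  /\ continuous (resolvent dom A z).

Fixpoint domn (dom : set H) (A : H -> H) (n : nat) : set H :=
  match n with
  | 0 => setT
  | n'.+1 => fun x => dom x /\ domn dom A n' (A x)
  end.

Definition dom_inf (dom : set H) (A : H -> H) : set H :=
  fun x => forall n, (0 < n)%N -> domn dom A n x.

Definition gen_eigenspace_inf (dom : set H) (A : H -> H) (l : C) : set H :=
  [set u | dom_inf dom A u /\
           exists n, (0 < n)%N /\ iter n (fun x => A x - l *: x) u = 0].

Definition gen_eigenspace (T : H -> H) (m : C) : set H :=
  [set u | exists n, (0 < n)%N /\ iter n (fun x => T x - m *: x) u = 0].

Definition ratfun (N : nat) (z : 'I_N -> C) (nu : 'I_N -> nat)
    (w : 'I_N -> nat -> C) (w0 : C) (l : C) : C :=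
  w0 + \sum_(j < N) \sum_(1 <= i < (nu j).+1) w j i / (z j - l) ^+ i.

Definition ratop (dom : set H) (A : H -> H) (N : nat) (z : 'I_N -> C)
    (nu : 'I_N -> nat) (w : 'I_N -> nat -> C) (w0 : C) (x : H) : H :=
  w0 *: x + \sum_(j < N) \sum_(1 <= i < (nu j).+1)
                w j i *: iter i (resolvent dom A (z j)) x.

Definition ratfun_preimage (N : nat) (z : 'I_N -> C) (nu : 'I_N -> nat)
    (w : 'I_N -> nat -> C) (w0 : C) (m : C) : set C :=
  [set l | (forall j, l != z j) /\ ratfun z nu w w0 l = m].

(* V is the (internal, algebraic) direct sum of the subspaces E λ, λ ∈ S:
   every element of V is a finite sum of elements of the E λ (λ ∈ S), every
   such finite sum lies in V, and the family is independent. *)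
Definition is_direct_sum (V : set H) (E : C -> set H) (S : set C) : Prop :=
  (forall u : H, V u <->
     exists (s : seq C) (f : C -> H),
       [/\ uniq s, (forall l, l \in s -> S l), (forall l, l \in s -> E l (f l))
         & u = \sum_(l <- s) f l])
  /\ (forall (s : seq C) (f : C -> H),
        uniq s -> (forall l, l \in s -> S l) -> (forall l, l \in s -> E l (f l)) ->
        \sum_(l <- s) f l = 0 -> forall l, l \in s -> f l = 0).

End Defs.

(* Main.v *)
Require Import Defs.
From HB Require Import structures.
From mathcomp Require Import all_boot all_order all_algebra.
From mathcomp Require Import all_classical all_reals all_analysis.
From mathcomp Require Import complex.
From mathcomp Require Import ring.
Import Order.TTheory GRing.Theory Num.Theory.
Import numFieldNormedType.Exports.
Local Open Scope ring_scope.
Local Open Scope classical_set_scope.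

Section Ops.
Variables (R : realType) (H : completeNormedModType R[i]).
Local Notation C := (R[i]).
Variables (dom : set H) (A : H -> H).
Hypothesis hsub : is_subspace dom.
Hypothesis hlin : forall (a : C) (x y : H), dom x -> dom y -> A (a *: x + y) = a *: A x + A y.

Lemma dom0 : dom 0. Proof. by case: hsub. Qed.
Lemma domL a {x y} : dom x -> dom y -> dom (a *: x + y). Proof. by case: hsub => _; apply. Qed.
Lemma A0 : A 0 = 0.
Proof.
have h := hlin 1 0 0 dom0 dom0; rewrite !scale1r addr0 in h.
by apply: (addrI (A 0)); rewrite addr0 -h.
Qed.

Lemma domnL {n} a {x y} : domn dom A n x -> domn dom A n y -> domn dom A n (a *: x + y).
Proof.
elim: n x y => [//|n IH] x y [dx hx] [dy hy]; split; first exact: domL.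
by rewrite hlin //; apply: IH.
Qed.
Lemma domn0 n : domn dom A n 0.
Proof. by elim: n => [//|n IH]; split; [exact: dom0|rewrite A0]. Qed.
Lemma domnD n x y : domn dom A n x -> domn dom A n y -> domn dom A n (x + y).
Proof. by move=> hx hy; have := domnL 1 hx hy; rewrite scale1r. Qed.
Lemma domnZ {n} a {x} : domn dom A n x -> domn dom A n (a *: x).
Proof. by move=> hx; have := domnL a hx (domn0 n); rewrite addr0. Qed.
Lemma domnN n x : domn dom A n x -> domn dom A n (- x).
Proof. by move=> hx; have := domnZ (-1) hx; rewrite scaleN1r. Qed.
Lemma domnB n x y : domn dom A n x -> domn dom A n y -> domn dom A n (x - y).
Proof. by move=> hx hy; apply: domnD => //; apply: domnN. Qed.
Lemma domn_mono n x : domn dom A n.+1 x -> domn dom A n x.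
Proof.
elim: n x => [//|n IH] x [dx hx]; split => //; exact: IH.
Qed.
Lemma domn_le m n x : (m <= n)%N -> domn dom A n x -> domn dom A m x.
Proof.
move=> /subnK <-; elim: (n - m)%N x => [|k IH] x //= hx.
by apply: IH; apply: domn_mono; rewrite -addSn.
Qed.
Lemma domn_sum n I (r : seq I) (P : pred I) (F : I -> H) :
  (forall i, P i -> domn dom A n (F i)) -> domn dom A n (\sum_(i <- r | P i) F i).
Proof. by move=> h; apply: big_ind => //; [exact: domn0 | move=> ???; exact: domnD]. Qed.

Definition Dinf x := forall n, domn dom A n x.
Lemma Dinf_iff x : Dinf x <-> dom_inf dom A x.
Proof.
split; first by move=> h n _.
by move=> h [|n] //; apply: h.
Qed.
Lemma Dinf0 : Dinf 0. Proof. move=> n; exact: domn0. Qed.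
Lemma DinfD x y : Dinf x -> Dinf y -> Dinf (x + y). Proof. by move=> ?? n; apply: domnD. Qed.
Lemma DinfZ a x : Dinf x -> Dinf (a *: x). Proof. by move=> ? n; apply: domnZ. Qed.
Lemma DinfB x y : Dinf x -> Dinf y -> Dinf (x - y). Proof. by move=> ?? n; apply: domnB. Qed.
Lemma Dinf_sum I (r : seq I) (P : pred I) (F : I -> H) :
  (forall i, P i -> Dinf (F i)) -> Dinf (\sum_(i <- r | P i) F i).
Proof. by move=> h n; apply: domn_sum => i /h. Qed.
Lemma Dinf_dom x : Dinf x -> dom x. Proof. by move=> h; case: (h 1%N). Qed.
Lemma Dinf_A x : Dinf x -> Dinf (A x). Proof. by move=> h n; case: (h n.+1). Qed.
Lemma Dinf_iter i x : Dinf x -> Dinf (iter i A x).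
Proof. by elim: i => [//|i IH] /IH /Dinf_A. Qed.

Lemma A_add x y : dom x -> dom y -> A (x + y) = A x + A y.
Proof. by move=> hx hy; have := @hlin 1 _ _ hx hy; rewrite !scale1r. Qed.
Lemma A_scale a x : dom x -> A (a *: x) = a *: A x.
Proof. by move=> hx; have := @hlin a _ _ hx dom0; rewrite !addr0 A0 addr0. Qed.
Lemma A_opp x : dom x -> A (- x) = - A x.
Proof. by move=> hx; rewrite -scaleN1r A_scale // scaleN1r. Qed.
Lemma A_sub x y : dom x -> dom y -> A (x - y) = A x - A y.
Proof.
move=> hx hy; rewrite A_add ?A_opp //.
by rewrite -scaleN1r; have := domL (-1) hy dom0; rewrite addr0.
Qed.
Lemma A_sum I (r : seq I) (P : pred I) (F : I -> H) :
  (forall i, P i -> Dinf (F i)) -> A (\sum_(i <- r | P i) F i) = \sum_(i <- r | P i) A (F i).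
Proof.
move=> h; elim: r => [|a r IH]; first by rewrite !big_nil A0.
rewrite !big_cons; case: ifP => Pa //.
rewrite A_add ?IH //; first exact/Dinf_dom/h.
by apply/Dinf_dom/Dinf_sum.
Qed.

Definition pe (p : {poly C}) (x : H) : H := \sum_(i < size p) p`_i *: iter i A x.

Lemma pe_widen n (p : {poly C}) x : (size p <= n)%N -> pe p x = \sum_(i < n) p`_i *: iter i A x.
Proof.
move=> le; rewrite /pe -(subnKC le) big_split_ord /= [X in _ + X]big1 ?addr0 //.
by move=> i _; rewrite nth_default ?scale0r // leq_addr.
Qed.
Lemma pe_add p q x : pe (p + q) x = pe p x + pe q x.
Proof.
rewrite (@pe_widen (maxn (size p) (size q))) ?size_polyD //.
rewrite (@pe_widen (maxn (size p) (size q)) p) ?leq_maxl //.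
rewrite (@pe_widen (maxn (size p) (size q)) q) ?leq_maxr //.
by rewrite -big_split; apply: eq_bigr => i _; rewrite coefD scalerDl.
Qed.
Lemma pe_scale c p x : pe (c *: p) x = c *: pe p x.
Proof.
rewrite (@pe_widen (size p)) ?size_scale_leq // /pe scaler_sumr.
by apply: eq_bigr => i _; rewrite coefZ scalerA.
Qed.
Lemma pe0 x : pe 0 x = 0. Proof. by rewrite /pe size_poly0 big_ord0. Qed.
Lemma pe_opp p x : pe (- p) x = - pe p x.
Proof. by rewrite -scaleN1r pe_scale scaleN1r. Qed.
Lemma pe_sub p q x : pe (p - q) x = pe p x - pe q x.
Proof. by rewrite pe_add pe_opp. Qed.
Lemma pe_C c x : pe c%:P x = c *: x.
Proof. by rewrite (@pe_widen 1) ?size_polyC_leq1 // big_ord1 coefC. Qed.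
Lemma pe1 x : pe 1 x = x.
Proof. by rewrite -polyC1 pe_C scale1r. Qed.
Lemma pe_X x : pe 'X x = A x.
Proof. by rewrite /pe size_polyX big_ord_recl big_ord1 !coefX /= scale0r add0r scale1r. Qed.
Lemma pe_sum I (r : seq I) (P : pred I) (F : I -> {poly C}) x :
  pe (\sum_(i <- r | P i) F i) x = \sum_(i <- r | P i) pe (F i) x.
Proof. exact: (big_morph (pe ^~ x) (fun p q => pe_add p q x) (pe0 x)). Qed.
Lemma pe_XsubC c x : pe ('X - c%:P) x = A x - c *: x.
Proof. by rewrite pe_sub pe_X pe_C. Qed.

Lemma pe_D p x : Dinf x -> Dinf (pe p x).
Proof. by move=> hx; apply: Dinf_sum => i _; apply/DinfZ/Dinf_iter. Qed.
Lemma pe_Acomm p x : Dinf x -> pe p (A x) = A (pe p x).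
Proof.
move=> hx; rewrite /pe A_sum; last by move=> i _; apply/DinfZ/Dinf_iter.
apply: eq_bigr => i _; rewrite A_scale; last exact/Dinf_dom/Dinf_iter.
by rewrite -iterSr iterS.
Qed.
Lemma pe_mulX p x : Dinf x -> pe (p * 'X) x = A (pe p x).
Proof.
move=> hx; rewrite (@pe_widen (size p).+1); last first.
  by apply: leq_trans (size_polyMleq _ _) _; rewrite size_polyX addn2.
rewrite big_ord_recl coefMX eqxx scale0r add0r /pe A_sum; last by move=> i _; apply/DinfZ/Dinf_iter.
apply: eq_bigr => i _; rewrite coefMX /= A_scale; last exact/Dinf_dom/Dinf_iter.
by rewrite add0n.
Qed.
Lemma pe_mul p q x : Dinf x -> pe (p * q) x = pe p (pe q x).
Proof.
move=> hx; move: q; elim/poly_ind: p => [|p c IH] q; first by rewrite mul0r !pe0.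
rewrite mulrDl -mulrA pe_add IH mul_polyC pe_scale [('X * q)]mulrC pe_mulX //.
have Dq := @pe_D q x hx; by rewrite pe_add pe_C pe_mulX // pe_Acomm.
Qed.
Lemma pe_comm p q x : Dinf x -> pe p (pe q x) = pe q (pe p x).
Proof. by move=> hx; rewrite -!pe_mul // mulrC. Qed.
Lemma iterA0 i : iter i A 0 = 0.
Proof. by elim: i => [//|i IH]; rewrite iterS IH A0. Qed.
Lemma pe_x0 p : pe p 0 = 0.
Proof. by rewrite /pe big1 // => i _; rewrite iterA0 scaler0. Qed.
Lemma iterA_add i x y : Dinf x -> Dinf y -> iter i A (x + y) = iter i A x + iter i A y.
Proof.
move=> hx hy; elim: i => [//|i IH]; rewrite !iterS IH A_add //; exact/Dinf_dom/Dinf_iter.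
Qed.
Lemma pe_xadd p x y : Dinf x -> Dinf y -> pe p (x + y) = pe p x + pe p y.
Proof.
by move=> hx hy; rewrite /pe -big_split; apply: eq_bigr => i _; rewrite iterA_add // scalerDr.
Qed.
Lemma pe_xsum p I (r : seq I) (P : pred I) (F : I -> H) :
  (forall i, P i -> Dinf (F i)) -> pe p (\sum_(i <- r | P i) F i) = \sum_(i <- r | P i) pe p (F i).
Proof.
move=> h; elim: r => [|a r IH]; first by rewrite !big_nil pe_x0.
rewrite !big_cons; case: ifP => Pa //.
by rewrite pe_xadd ?IH //; [exact: h | exact: Dinf_sum].
Qed.
Lemma pe_XsubC_exp c m x : Dinf x ->
  pe (('X - c%:P) ^+ m) x = iter m (fun y => A y - c *: y) x.
Proof.
move=> hx; elim: m => [|m IH]; first by rewrite expr0 pe1.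
by rewrite exprS pe_mul // pe_XsubC IH.
Qed.


Lemma pe_coprime a b x : coprimep a b -> Dinf x -> pe a x = 0 -> pe b x = 0 -> x = 0.
Proof.
move=> /Bezout_eq1_coprimepP [[u v] /= huv] hx ha hb.
by rewrite -(pe1 x) -huv pe_add !pe_mul // ha hb !pe_x0 addr0.
Qed.

Lemma pe_exp_mono l m m' y : Dinf y -> (m <= m')%N ->
  pe (('X - l%:P) ^+ m) y = 0 -> pe (('X - l%:P) ^+ m') y = 0.
Proof.
by move=> hy /subnK <- h; rewrite exprD pe_mul // h pe_x0.
Qed.

Definition GE l y := Dinf y /\ exists m, pe (('X - l%:P) ^+ m) y = 0.

Lemma GE_iff l y : gen_eigenspace_inf dom A l y <-> GE l y.
Proof.
split.
  move=> [/Dinf_iff hy [n [_ hn]]]; split => //; exists n.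
  by rewrite pe_XsubC_exp.
move=> [hy [m hm]]; split; first exact/Dinf_iff.
exists m.+1; split => //.
by rewrite iterS -pe_XsubC_exp // hm A0 scaler0 subr0.
Qed.

Lemma decomp (q : {poly C}) : q != 0 -> forall v, Dinf v -> pe q v = 0 ->
  exists (s : seq C) (f : C -> H), [/\ uniq s, (forall l, l \in s -> root q l),
    (forall l, l \in s -> GE l (f l)) & v = \sum_(l <- s) f l].
Proof.
have [n le] : {n | (size q <= n)%N} := exist _ (size q) (leqnn _).
elim: n q le => [|n IH] q le qn0 v Dv hv.
  by move: qn0; rewrite -size_poly_eq0; move: le; rewrite leqn0 => ->.
have [s1|sn1] := eqVneq (size q) 1%N.
  move/eqP/size_poly1P: s1 => [c c0 qc].
  move: hv; rewrite qc pe_C => /eqP; rewrite scaler_eq0 (negbTE c0) /= => /eqP ->.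
  by exists [::], (fun _ => 0); split => //; rewrite big_nil.
have [al ral] := closed_rootP _ sn1.
have [m [q' nr qe]] := multiplicity_XsubC q al.
rewrite qn0 /= in nr.
have q'0 : q' != 0 by apply: contra qn0; rewrite qe => /eqP ->; rewrite mul0r.
have m0 : (0 < m)%N.
  case: m qe => // qe; move: ral; rewrite qe expr0 mulr1 => h.
  by move: nr; rewrite h.
have sq' : (size q' <= n)%N.
  move: le; rewrite qe size_mul ?expf_neq0 ?polyXsubC_eq0 // size_exp_XsubC.
  rewrite addnS /= => h; rewrite -ltnS; apply: leq_trans h; by rewrite -addn1 leq_add2l.
have cop : coprimep q' (('X - al%:P) ^+ m) by apply: coprimep_expr; rewrite coprimep_XsubC.
move/Bezout_eq1_coprimepP: (cop) => [[a b] /= hab].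
set v1 := pe (a * q') v; set v2 := pe (b * ('X - al%:P) ^+ m) v.
have ev : v = v1 + v2 by rewrite /v1 /v2 -pe_add hab pe1.
have h1 : pe (('X - al%:P) ^+ m) v1 = 0.
  rewrite /v1 -pe_mul //.
  have -> : ('X - al%:P) ^+ m * (a * q') = a * q by rewrite qe; ring.
  by rewrite pe_mul // hv pe_x0.
have h2 : pe q' v2 = 0.
  rewrite /v2 -pe_mul //.
  have -> : q' * (b * ('X - al%:P) ^+ m) = b * q by rewrite qe; ring.
  by rewrite pe_mul // hv pe_x0.
have [s' [f' [us' rs' gs' e2]]] := IH q' sq' q'0 v2 (pe_D _ _ Dv) h2.
have als' : al \notin s' by apply/negP => /rs'; rewrite (negbTE nr).
exists (al :: s'), (fun l => if l == al then v1 else f' l); split.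
- by rewrite /= als'.
- move=> l; rewrite inE => /orP [/eqP -> //|/rs' rl].
  by rewrite qe rootM rl.
- move=> l; rewrite inE; case: eqP => [-> _|nl /= ls]; last exact: gs'.
  by split; [exact: pe_D | exists m].
- rewrite big_cons eqxx ev e2; congr (_ + _); apply: eq_big_seq => l ls.
  by case: eqP => // el; move: ls als'; rewrite el => ->.
Qed.


Section Res.
Variables (z0 : C) (hres : in_resolvent_set dom A z0).
Local Notation Rz := (resolvent dom A z0).

Lemma res_spec y : dom (Rz y) /\ z0 *: Rz y - A (Rz y) = y.
Proof.
case: hres => /(_ y) [x [hx _]] _; rewrite /resolvent.
by have := @xgetPex _ 0 [set x | dom x /\ z0 *: x - A x = y]; apply; exists x.
Qed.
Lemma res_uniq x y : dom x -> z0 *: x - A x = y -> Rz y = x.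
Proof.
move=> dx ex; case: hres => /(_ y) [x0 [hx0 u]] _; rewrite /resolvent.
apply: xget_unique; first by [].
by move=> y' hy'; rewrite -(u y' hy') (u x (conj dx ex)).
Qed.
Lemma res0 : Rz 0 = 0.
Proof. by apply: res_uniq; [exact: dom0 | rewrite A0 scaler0 subr0]. Qed.
Lemma res_opp y : Rz (- y) = - Rz y.
Proof.
have [d e] := res_spec y.
have dn : dom (- Rz y) by rewrite -scaleN1r; have := domL (-1) d dom0; rewrite addr0.
apply: res_uniq => //; rewrite A_opp // scalerN opprK -[in RHS]e opprB; exact: addrC.
Qed.
Lemma iter_res_opp i y : iter i Rz (- y) = - iter i Rz y.
Proof. by elim: i => [//|i IH]; rewrite !iterS IH res_opp. Qed.
Lemma iter_res0 i : iter i Rz 0 = 0.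
Proof. by elim: i => [//|i IH]; rewrite iterS IH res0. Qed.
Lemma res_domn n y : domn dom A n y -> domn dom A n.+1 (Rz y).
Proof.
elim: n y => [|n IH] y hy; first by split => //; case: (res_spec y).
have [d e] := res_spec y.
split => //.
have -> : A (Rz y) = z0 *: Rz y - y.
  by move: e; set r := Rz y => e; rewrite -e opprB addrCA subrr addr0.
apply: domnB; first by apply: domnZ; apply: IH; apply: domn_mono.
exact: hy.
Qed.
Lemma iter_res_domn n i y : domn dom A n y -> domn dom A (n + i) (iter i Rz y).
Proof.
elim: i => [|i IH] hy; first by rewrite addn0.
by rewrite iterS addnS; apply: res_domn; apply: IH.
Qed.
Lemma res_D y : Dinf y -> Dinf (Rz y).
Proof. by move=> hy n; apply: domn_mono; apply: res_domn. Qed.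
Lemma res_left x : dom x -> Rz (z0 *: x - A x) = x.
Proof. by move=> dx; apply: res_uniq. Qed.
Lemma res_XsubC x : dom x -> Rz (pe ('X - z0%:P) x) = - x.
Proof.
move=> dx; rewrite pe_XsubC -opprB res_opp res_left //.
Qed.
Lemma res_iter_exp i y : Dinf y ->
  iter i Rz (pe (('X - z0%:P) ^+ i) y) = (-1) ^+ i *: y.
Proof.
move=> hy; elim: i => [|i IH]; first by rewrite expr0 pe1 scale1r.
rewrite iterSr exprS pe_mul // res_XsubC; last exact/Dinf_dom/pe_D.
by rewrite iter_res_opp IH exprS mulN1r scaleNr.
Qed.
Lemma pe_XsubC_inj x : Dinf x -> pe ('X - z0%:P) x = 0 -> x = 0.
Proof.
move=> hx h; rewrite -(res_left x (Dinf_dom _ hx)) -opprB res_opp.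
by rewrite -pe_XsubC h res0 oppr0.
Qed.
Lemma pe_XsubC_surj y : Dinf y -> exists x, Dinf x /\ pe ('X - z0%:P) x = y.
Proof.
move=> hy; exists (- Rz y); split; first by rewrite -scaleN1r; apply/DinfZ/res_D.
have [d e] := res_spec y.
rewrite pe_XsubC A_opp // scalerN; move: e d; set r := Rz y => e d.
by rewrite -e opprK addrC.
Qed.
End Res.

Definition pinj (p : {poly C}) := forall x, Dinf x -> pe p x = 0 -> x = 0.
Definition psurj (p : {poly C}) := forall y, Dinf y -> exists x, Dinf x /\ pe p x = y.

Lemma pinjM p q : pinj p -> pinj q -> pinj (p * q).
Proof.
move=> hp hq x hx; rewrite pe_mul // => h; apply: hq => //; apply: hp => //; exact: pe_D.
Qed.
Lemma psurjM p q : psurj p -> psurj q -> psurj (p * q).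
Proof.
move=> hp hq y hy; have [x1 [d1 e1]] := hp y hy; have [x2 [d2 e2]] := hq x1 d1.
by exists x2; split => //; rewrite pe_mul // e2.
Qed.
Lemma pinj1 : pinj 1. Proof. by move=> x _; rewrite pe1. Qed.
Lemma psurj1 : psurj 1. Proof. by move=> y hy; exists y; rewrite pe1. Qed.
Lemma pinjX p n : pinj p -> pinj (p ^+ n).
Proof. by move=> h; elim: n => [|n IH]; [rewrite expr0; exact: pinj1 | rewrite exprS; exact: pinjM]. Qed.
Lemma psurjX p n : psurj p -> psurj (p ^+ n).
Proof. by move=> h; elim: n => [|n IH]; [rewrite expr0; exact: psurj1 | rewrite exprS; exact: psurjM]. Qed.


Section Main.
Variables (N : nat) (z : 'I_N -> C) (nu : 'I_N -> nat) (w : 'I_N -> nat -> C) (w0 mu : C).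
Hypothesis hres : forall j, in_resolvent_set dom A (z j).
Hypothesis hmu : mu != w0.

Definition pp : {poly C} := \prod_(j < N) ('X - (z j)%:P) ^+ (nu j).
Definition pji j i : {poly C} :=
  ('X - (z j)%:P) ^+ (nu j - i) * \prod_(k < N | k != j) ('X - (z k)%:P) ^+ (nu k).
Definition qq : {poly C} := (w0 - mu) *: pp +
  \sum_(j < N) \sum_(1 <= i < (nu j).+1) (w j i * (-1) ^+ i) *: pji j i.
Definition Phi x := ratop dom A z nu w w0 x - mu *: x.
Definition Gop y := \sum_(j < N) \sum_(1 <= i < (nu j).+1)
                w j i *: iter i (resolvent dom A (z j)) y.

Lemma pp_split j i : (i <= nu j)%N -> pp = ('X - (z j)%:P) ^+ i * pji j i.
Proof. by move=> le; rewrite /pp (bigD1 j) //= /pji mulrA -exprD subnKC. Qed.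

Lemma Phi_pe x : Dinf x -> Phi (pe pp x) = pe qq x.
Proof.
move=> hx; rewrite /Phi /ratop /qq pe_add pe_scale pe_sum.
have inner j : \sum_(1 <= i < (nu j).+1) w j i *: iter i (resolvent dom A (z j)) (pe pp x)
   = pe (\sum_(1 <= i < (nu j).+1) (w j i * (-1) ^+ i) *: pji j i) x.
  rewrite pe_sum; apply: eq_big_nat => i /andP [i1 i2].
  rewrite pe_scale (@pp_split j i) // pe_mul // res_iter_exp //; last exact: pe_D.
  by rewrite scalerA.
rewrite (eq_bigr _ (fun j _ => inner j)).
by rewrite scalerBl addrAC.
Qed.

Lemma Phi_pe_exp n x : Dinf x -> iter n Phi (pe (pp ^+ n) x) = pe (qq ^+ n) x.
Proof.
elim: n x => [|n IH] x hx; first by rewrite !expr0 !pe1.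
have D1 := pe_D (pp ^+ n) x hx; have D2 := pe_D qq x hx.
by rewrite iterSr exprS pe_mul // Phi_pe // pe_comm // IH // -pe_mul // -exprSr.
Qed.

Lemma q_eval l : (forall j, l != z j) -> qq.[l] = pp.[l] * (ratfun z nu w w0 l - mu).
Proof.
move=> hl; rewrite /qq /ratfun hornerD hornerZ horner_sum.
have inner j : (\sum_(1 <= i < (nu j).+1) (w j i * (-1) ^+ i) *: pji j i).[l]
   = pp.[l] * \sum_(1 <= i < (nu j).+1) w j i / (z j - l) ^+ i.
  rewrite horner_sum mulr_sumr; apply: eq_big_nat => i /andP [i1 i2].
  rewrite hornerZ (@pp_split j i) //; move: (pji j i) => P.
  rewrite hornerM horner_exp hornerXsubC.
  have nz : (z j - l) ^+ i != 0 by rewrite expf_neq0 // subr_eq0 eq_sym.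
  have -> : l - z j = - (z j - l) by rewrite opprB.
  rewrite (exprNn (z j - l)); move: nz; set t := (z j - l) ^+ i => nz.
  by field.
rewrite (eq_bigr _ (fun j _ => inner j)) -mulr_sumr.
ring.
Qed.

Lemma pp_eval_neq0 l : (forall j, l != z j) -> pp.[l] != 0.
Proof.
move=> hl; rewrite /pp horner_prod; apply/prodf_neq0 => j _.
by rewrite horner_exp hornerXsubC expf_neq0 // subr_eq0.
Qed.

Lemma pp_neq0 : pp != 0.
Proof. by apply/prodf_neq0 => j _; rewrite expf_neq0 // polyXsubC_eq0. Qed.

Lemma qq_neq0 : qq != 0.
Proof.
have pp0 := pp_neq0.
have sp : (size (\sum_(j < N) \sum_(1 <= i < (nu j).+1) (w j i * (-1) ^+ i) *: pji j i)%R
           < size pp)%N.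
  apply: (big_ind (fun s : {poly C} => (size s < size pp)%N)) => [|a b ha hb|j _]; first by rewrite size_poly0 size_poly_gt0.
    by apply: leq_ltn_trans (size_polyD a b) _; rewrite gtn_max ha hb.
  rewrite big_nat_cond; apply: (big_ind (fun s : {poly C} => (size s < size pp)%N)) => [|a b ha hb|i /andP [/andP [i1 i2] _]].
  - by rewrite size_poly0 size_poly_gt0.
  - by apply: leq_ltn_trans (size_polyD a b) _; rewrite gtn_max ha hb.
  apply: leq_ltn_trans (size_scale_leq _ _) _.
  have pj0 : pji j i != 0.
    by apply: contra pp0 => /eqP h; rewrite (@pp_split j i) // h mulr0.
  rewrite (@pp_split j i) //; move: (pji j i) pj0 => P P0.
  rewrite size_mul ?expf_neq0 ?polyXsubC_eq0 // size_exp_XsubC.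
  by rewrite addSn /= -[X in (X < _)%N]add0n ltn_add2r.
apply/eqP => q0; move: q0; rewrite /qq => /eqP; rewrite addr_eq0 => /eqP e.
have := congr1 (fun p : {poly C} => size p) e; rewrite /=; rewrite size_scale ?size_polyN; last by rewrite subr_eq0 eq_sym.
by move=> h; move: sp; rewrite -h ltnn.
Qed.


Lemma G_domn k y : domn dom A k y -> domn dom A k.+1 (Gop y).
Proof.
move=> hy; apply: domn_sum => j _; rewrite big_nat_cond; apply: domn_sum => i /andP [/andP [i1 _] _].
apply: domnZ; apply: (@domn_le _ (k + i)); first by rewrite -addn1 leq_add2l.
exact: iter_res_domn.
Qed.

Lemma Phi0 : Phi 0 = 0.
Proof.
rewrite /Phi /ratop !scaler0 subr0 add0r big1 // => j _; rewrite big1 // => i _.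
by rewrite iter_res0 // scaler0.
Qed.

Lemma Einf u : gen_eigenspace (ratop dom A z nu w w0) mu u -> Dinf u.
Proof.
move=> [n [_ hn]]; have hn' : iter n Phi u = 0 := hn.
have yn j : (n <= j)%N -> iter j Phi u = 0.
  move=> /subnK <-; rewrite iterD hn'; elim: (j - n)%N => [//|k IH].
  by rewrite iterS IH Phi0.
have w0mu : w0 - mu != 0 by rewrite subr_eq0 eq_sym.
have key k : forall j, domn dom A k (iter j Phi u).
  elim: k => [//|k IHk].
  suff h : forall d j, (n <= j + d)%N -> domn dom A k.+1 (iter j Phi u).
    by move=> j; apply: (h n); rewrite leq_addl.
  elim=> [|d IHd] j hj.
    by rewrite addn0 in hj; rewrite yn //; exact: domn0.
  have h1 : domn dom A k.+1 (iter j.+1 Phi u) by apply: IHd; rewrite addSn -addnS.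
  rewrite iterS in h1; move: h1 (IHk j); set y := iter j Phi u => h1 hy.
  have e : Phi y - Gop y = (w0 - mu) *: y.
    have hr : ratop dom A z nu w w0 y = w0 *: y + Gop y by [].
    by rewrite /Phi hr scalerBl addrAC addrK.
  have -> : y = (w0 - mu)^-1 *: (Phi y - Gop y) by rewrite e scalerA mulVf // scale1r.
  apply: domnZ; apply: domnB => //; exact: G_domn.
by move=> k; apply: (key k 0%N).
Qed.

Lemma GE_uniform (s : seq C) (f : C -> H) : (forall l, l \in s -> GE l (f l)) ->
  exists m, forall l, l \in s -> pe (('X - l%:P) ^+ m) (f l) = 0.
Proof.
elim: s => [|a s IH] h; first by exists 0%N.
have [m hm] : exists m, forall l, l \in s -> pe (('X - l%:P) ^+ m) (f l) = 0.
  by apply: IH => l ls; apply: h; rewrite inE ls orbT.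
have [Da [ma hma]] := h a (mem_head _ _).
exists (maxn m ma) => l; rewrite inE => /orP [/eqP -> |ls].
  by apply: (pe_exp_mono _ _ _ _ Da (leq_maxr _ _)).
have [Dl _] : GE l (f l) by apply: h; rewrite inE ls orbT.
exact: (pe_exp_mono _ _ _ _ Dl (leq_maxl _ _) (hm l ls)).
Qed.

Lemma in_pre_root l : ratfun_preimage z nu w w0 mu l -> root qq l.
Proof.
by move=> [hl e]; rewrite rootE q_eval // e subrr mulr0.
Qed.

Lemma main_thm : is_direct_sum (gen_eigenspace (ratop dom A z nu w w0) mu)
                (gen_eigenspace_inf dom A) (ratfun_preimage z nu w w0 mu).
Proof.
have pinj_pp : pinj pp.
  rewrite /pp; apply: (big_ind pinj) => [|a b|j _]; [exact: pinj1|exact: pinjM|].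
  apply: pinjX => x hx; exact: (@pe_XsubC_inj (z j) (hres j) x hx).
have psurj_pp : psurj pp.
  rewrite /pp; apply: (big_ind psurj) => [|a b|j _]; [exact: psurj1|exact: psurjM|].
  apply: psurjX => y hy; exact: (@pe_XsubC_surj (z j) (hres j) y hy).
split.
  move=> u; split.
  - move=> hu; have Du := Einf u hu.
    move: hu => [n [n0 hn]]; have hn' : iter n Phi u = 0 := hn.
    have [x [Dx ex]] := psurjX pp n psurj_pp u Du.
    have hq : pe (qq ^+ n) x = 0 by rewrite -Phi_pe_exp // ex.
    have qn0 : qq ^+ n != 0 by rewrite expf_neq0 // qq_neq0.
    have [s [f [us rs gs es]]] := decomp (qq ^+ n) qn0 x Dx hq.
    pose P := fun l => [forall j, l != z j].
    exists [seq l <- s | P l], (fun l => pe (pp ^+ n) (f l)); split.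
    + exact: filter_uniq.
    + move=> l; rewrite mem_filter => /andP [/forallP hl ls]; split => //.
      have := rs l ls; rewrite rootE horner_exp expf_eq0 => /andP [_].
      rewrite (q_eval l hl) mulf_eq0 (negbTE (pp_eval_neq0 l hl)) /= subr_eq0 => /eqP //.
    + move=> l; rewrite mem_filter => /andP [_ ls]; apply/GE_iff.
      have [Dl [m hm]] := gs l ls; split; first exact: pe_D.
      by exists m; rewrite pe_comm // hm pe_x0.
    + rewrite big_filter -ex es big_seq pe_xsum; last by move=> l ls; case: (gs l ls).
      rewrite -big_seq [RHS]big_mkcond; apply: eq_big_seq => l ls; case: ifP => // /negbT.
      rewrite /P negb_forall => /existsP [j /negPn /eqP el].
      have [Dl [m hm]] := gs l ls.
      have f0 : f l = 0.
        apply: (pinjX ('X - (z j)%:P) m _ (f l) Dl); last by rewrite -el.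
        by move=> y hy; exact: (@pe_XsubC_inj (z j) (hres j) y hy).
      by rewrite f0 pe_x0.
  - move=> [s [f [us sS sE ->]]].
    have gs : forall l, l \in s -> GE l (f l) by move=> l /sE /GE_iff.
    have [m hm] := GE_uniform _ _ gs.
    have Du : Dinf (\sum_(l <- s) f l).
      by rewrite big_seq; apply: Dinf_sum => l /gs [].
    have hq : pe (qq ^+ m.+1) (\sum_(l <- s) f l) = 0.
      rewrite big_seq pe_xsum; last by move=> l /gs [].
      rewrite big1 // => l ls.
      have [Dl _] := gs l ls.
      have /factor_theorem [q1 e1] := in_pre_root _ (sS l ls).
      rewrite e1 exprMn pe_mul //.
      by rewrite (pe_exp_mono _ _ _ _ Dl (leqnSn m) (hm l ls)) pe_x0.
    have [x [Dx ex]] := psurjX pp m.+1 psurj_pp _ Du.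
    exists m.+1; split => //.
    have hx : pe (qq ^+ m.+1) x = 0.
      apply: (pinjX pp m.+1 pinj_pp _ (pe_D _ _ Dx)).
      by rewrite pe_comm // ex.
    by have := Phi_pe_exp m.+1 x Dx; rewrite ex hx.
move=> s f us _ sE s0.
have gs : forall l, l \in s -> GE l (f l) by move=> l /sE /GE_iff.
elim: s f us gs s0 {sE} => [//|a s IH] f /= /andP [nas us] gs s0 l.
have gs' : forall l, l \in s -> GE l (f l) by move=> l' ls; apply: gs; rewrite inE ls orbT.
have [m hm] := GE_uniform _ _ gs.
have Ds : Dinf (\sum_(l <- s) f l) by rewrite big_seq; apply: Dinf_sum => l' /gs' [].
have [Da _] := gs a (mem_head _ _).
pose g := fun l => pe (('X - a%:P) ^+ m) (f l).
have gsum : \sum_(l <- s) g l = 0.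
  have e := congr1 (pe (('X - a%:P) ^+ m)) s0.
  rewrite big_cons pe_xadd // hm ?mem_head // add0r big_seq pe_xsum in e; last by move=> l' /gs' [].
  by rewrite big_seq e pe_x0.
have gsg : forall l, l \in s -> GE l (g l).
  move=> l' ls; have [Dl [m' hm']] := gs' l' ls; split; first exact: pe_D.
  by exists m'; rewrite /g pe_comm // hm' pe_x0.
have g0 := IH g us gsg gsum.
have fl0 : forall l, l \in s -> f l = 0.
  move=> l' ls; have [Dl _] := gs' l' ls.
  apply: (pe_coprime (('X - a%:P) ^+ m) (('X - l'%:P) ^+ m)) => //.
  - apply: coprimep_expl; apply: coprimep_expr; rewrite coprimep_XsubC root_XsubC.
    by apply: contra nas => /eqP <-.
  - exact: g0.
  - by apply: hm; rewrite inE ls orbT.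
rewrite inE => /orP [/eqP -> | ls]; last exact: fl0.
move: s0; rewrite big_cons big1_seq ?addr0 //.
Qed.

End Main.

End Ops.

Theorem lemma2p1 (R : realType) (H : completeNormedModType R[i])
    (ip : H -> H -> R[i]) (dom : set H) (A : H -> H)
    (N : nat) (z : 'I_N -> R[i]) (nu : 'I_N -> nat)
    (w : 'I_N -> nat -> R[i]) (w0 : R[i]) (mu : R[i]) :
  is_inner_product ip ->
  is_closed_operator dom A ->
  injective z ->
  (forall j, (0 < nu j)%N) ->
  (forall j, in_resolvent_set dom A (z j)) ->
  mu != w0 ->
  is_direct_sum (gen_eigenspace (ratop dom A z nu w w0) mu)
                (gen_eigenspace_inf dom A)
                (ratfun_preimage z nu w w0 mu).
Proof.
move=> _ [hsub hlin _] _ _ hres hmu.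
exact: (@main_thm R H dom A hsub hlin N z nu w w0 mu hres hmu).
Qed.
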